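(* Let $n=3$ and let $l_1,l_2,l_3,l_\infty$ be nonnegative integers. Two diagrams $x,y\in X(l_1,l_2,l_3,l_\infty)$ lie in the same $J_3$-orbit if and only if they have the same border thickness.
   Context: Cactus group: $J_n$ is the group generated by $s_{p,q}$, $1\le p<q\le n$, subject to the relations $s_{p,q}^2=e$; $s_{p,q}s_{p',q'}=s_{p',q'}s_{p,q}$ if $[p,q]$ and $[p',q']$ are disjoint; $s_{p,q}s_{p',q'}s_{p,q}=s_{p+q-q',p+q-p'}$ if $p\le p'<q'\le q$. Arc diagrams: fix nonnegative integers $l_1,\dots,l_n,l_\infty$. On the boundary circle of a closed disc place $n+1$ marked positions: position $0$ (occupied by $z_\infty$) and positions $1,\dots,n$ following it clockwise. An arc diagram is a bijective assignment of labels $z_1,\dots,z_n$ to positions $1,\dots,n$ together with a finite collection of simple arcs in the disc, pairwise disjoint except at endpoints, each joining two distinct marked points, such that $z_j$ is an endpoint of exactly $l_j$ arcs ($j\in\{1,\dots,n,\infty\}$; $l_j$ is the valence). Parallel arcs are allowed; diagrams are up to isotopy, equivalently determined by the labelling and the number of arcs between each pair of marked points. $X(l_1,\dots,l_n,l_\infty)$ is the set of such diagrams. Action: $s_{p,q}$ ($1\le p<q\le n$) acts by cutting off positions $p,\dots,q$ with a chord $\ell$ (arcs isotoped to cross $\ell$ at most once), reflecting that region by the reflection reversing $\ell$ (label at position $p+t$ goes to position $q-t$, crossing points on $\ell$ reversed), leaving the rest unchanged and reconnecting arcs at $\ell$. Words act right to left; this is an action of $J_n$. Border thickness: the minimum,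 over the $n+1$ cyclically adjacent pairs of positions $(0,1),(1,2),\dots,(n-1,n),(n,0)$, of the number of arcs joining the two points of the pair. *)

(* Defs.v *)
(* Arc diagrams on a disc with n+1 marked boundary positions
   0,1,...,n (clockwise), position 0 carrying z_infinity. *)
From Stdlib Require Import Relations.
From mathcomp Require Import all_boot.
Set Implicit Arguments. Unset Strict Implicit. Unset Printing Implicit Defensive.

(* Raw data of a diagram:
   - [lab i] = index of the label sitting at position i
     (label index 0 stands for z_infinity, label index j>=1 for z_j);
   - [arcs (i,j)] = number of arcs joining the marked points at positions i,j. *)
Record diagram (n : nat) := Diagram {
  lab  : {ffun 'I_n.+1 -> 'I_n.+1};
  arcs : {ffun 'I_n.+1 * 'I_n.+1 -> nat} }.

(* Membership in X(l_1,...,l_n,l_infty); [v k] is the valence of label k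
   (v 0 = l_infty, v j = l_j). *)
Definition wf (n : nat) (v : 'I_n.+1 -> nat) (x : diagram n) : Prop :=
  [/\ injective (lab x) /\ lab x ord0 = ord0,
      (forall i, arcs x (i, i) = 0),
      (forall i j, arcs x (i, j) = arcs x (j, i)),
      (* arcs are pairwise disjoint except at endpoints: no crossing chords *)
      (forall a b c d : 'I_n.+1, a < b -> b < c -> c < d ->
          arcs x (a, c) = 0 \/ arcs x (b, d) = 0)
    & (forall i, \sum_(j : 'I_n.+1) arcs x (i, j) = v (lab x i))].

Definition border (n : nat) (x : diagram n) : nat :=
  \big[minn/arcs x (ord0, ordS ord0)]_(i : 'I_n.+1) arcs x (i, ordS i).

Section Action.
Variables (n p q : nat) (x : diagram n).

(* positions p..q are cut off by the chord l *)
Definition inside (i : 'I_n.+1) : bool := (p <= i) && (i <= q).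
Definition refl (i : 'I_n.+1) : 'I_n.+1 := inord (p + q - i).

(* number of arcs crossing l with inside endpoint at position i *)
Definition cin (i : nat) : nat :=
  \sum_(o : 'I_n.+1 | ~~ inside o) arcs x (inord i, o).
(* number of arcs crossing l with outside endpoint at position o *)
Definition cout (o : nat) : nat :=
  \sum_(i : 'I_n.+1 | inside i) arcs x (i, inord o).

(* Crossing points on l, listed from the end A of l (between positions p-1
   and p) to the end B (between q and q+1).  Before reflection the inside
   endpoints appear in increasing position order; the outside endpoints appear
   in the order p-1, p-2, ..., 0, n, n-1, ..., q+1.  After reflecting the
   inside region (l reversed), the inside endpoint sequence (in new positions)
   is the following. *)
Definition new_inside_seq : seq nat :=
  flatten [seq nseq (cin (p + q - i)) i | i <- iota p (q - p).+1].
Definition outside_seq : seq nat :=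
  flatten [seq nseq (cout o) o | o <- rev (iota 0 p) ++ rev (iota q.+1 (n - q))].
(* reconnection at l : k-th crossing point inside glued to k-th outside *)
Definition reconnected : seq (nat * nat) := zip new_inside_seq outside_seq.

Definition act_arcs (e : 'I_n.+1 * 'I_n.+1) : nat :=
  let: (i, j) := e in
  if inside i && inside j then arcs x (refl i, refl j)
  else if ~~ inside i && ~~ inside j then arcs x (i, j)
  else if inside i then count_mem (val i, val j) reconnected
  else count_mem (val j, val i) reconnected.

Definition act_lab (i : 'I_n.+1) : 'I_n.+1 :=
  if inside i then lab x (refl i) else lab x i.

Definition act : diagram n := Diagram [ffun i => act_lab i] [ffun e => act_arcs e].
End Action.

Definition step (n : nat) (v : 'I_n.+1 -> nat) (x y : diagram n) : Prop :=
  wf v x /\ wf v y /\ exists p q, [/\ 1 <= p, p < q, q <= n & y = act p q x].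

Definition same_orbit (n : nat) (v : 'I_n.+1 -> nat) : relation (diagram n) :=
  clos_refl_sym_trans (diagram n) (step v).

Definition valence3 (l1 l2 l3 linf : nat) (k : 'I_4) : nat :=
  nth 0 [:: linf; l1; l2; l3] k.

(* Main.v *)
Require Import Defs.
From Stdlib Require Import Relations.
From mathcomp Require Import all_boot.
From mathcomp Require Import zify.
Set Warnings "-notation-overridden".
Set Implicit Arguments. Unset Strict Implicit. Unset Printing Implicit Defensive.

Notation st := (nat*nat*nat*nat*nat*nat)%type.
Definition mkA (s : st) (i j : nat) : nat :=
  let: (A,B,C,D,E,F) := s in
  match i, j with
  | 0,1 | 1,0 => A | 0,2 | 2,0 => B | 0,3 | 3,0 => C
  | 1,2 | 2,1 => D | 1,3 | 3,1 => E | 2,3 | 3,2 => F | _,_ => 0 end.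
Definition shape (x : diagram 3) (s : st) := forall i j : 'I_4, arcs x (i,j) = mkA s i j.

Definition f12 (s : st) : st :=
  let: (A,B,C,D,E,F) := s in
  let m := minn (B+F) (A+B) in (m, (A+B)-m, C, D, (B+F)-m, (E+F)-((B+F)-m)).
Definition f23 (s : st) : st :=
  let: (A,B,C,D,E,F) := s in
  let m := minn (C+E) (D+E) in (A, (C+E)-m, (B+C)-((C+E)-m), m, (D+E)-m, F).
Definition f13 (s : st) : st :=
  let: (A,B,C,D,E,F) := s in (C,B,A,F,E,D).

Lemma zip_nseq2 T U n (x : T) (y : U) : zip (nseq n x) (nseq n y) = nseq n (x,y).
Proof. by elim: n => //= n ->. Qed.

Lemma zcount (T U : eqType) (i1 i2 : T) (o1 o2 : U) a b c d :
  i1 != i2 -> o1 != o2 -> a + b = c + d ->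
  let Z := zip (nseq a i1 ++ nseq b i2) (nseq c o1 ++ nseq d o2) in
  [/\ count_mem (i1,o1) Z = minn a c, count_mem (i1,o2) Z = a - minn a c,
      count_mem (i2,o1) Z = c - minn a c & count_mem (i2,o2) Z = d - (a - minn a c)].
Proof.
move=> hi ho hs /=.
have hi' : i2 != i1 by rewrite eq_sym.
have ho' : o2 != o1 by rewrite eq_sym.
case: (leqP a c) => hac.
- have -> : nseq c o1 = nseq a o1 ++ nseq (c - a) o1 by rewrite -nseqD subnKC.
  have -> : nseq b i2 = nseq (c - a) i2 ++ nseq d i2 by rewrite -nseqD; congr nseq; lia.
  rewrite -catA zip_cat ?size_nseq // zip_nseq2 zip_cat ?size_nseq // zip_nseq2 zip_nseq2.
  rewrite !count_cat !count_nseq /= !xpair_eqE !eqxx (negbTE hi) (negbTE ho) (negbTE hi') (negbTE ho') /=.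
  split; lia.
- have -> : nseq a i1 = nseq c i1 ++ nseq (a - c) i1 by rewrite -nseqD subnKC // ltnW.
  have -> : nseq d o2 = nseq (a - c) o2 ++ nseq b o2 by rewrite -nseqD; congr nseq; lia.
  rewrite -catA zip_cat ?size_nseq // zip_nseq2 zip_cat ?size_nseq // zip_nseq2 zip_nseq2.
  rewrite !count_cat !count_nseq /= !xpair_eqE !eqxx (negbTE hi) (negbTE ho) (negbTE hi') (negbTE ho') /=.
  split; lia.
Qed.

Lemma zcount3 (T U : eqType) (i1 i2 i3 : T) (o : U) a b c :
  let Z := zip (nseq a i1 ++ nseq b i2 ++ nseq c i3) (nseq (a + b + c) o) in
  Z = nseq a (i1,o) ++ nseq b (i2,o) ++ nseq c (i3,o).
Proof.
by rewrite /= -addnA nseqD zip_cat ?size_nseq // zip_nseq2 nseqD zip_cat ?size_nseq // !zip_nseq2.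
Qed.

Ltac csum hs := rewrite /cin /cout big_mkcond /= !big_ord_recl big_ord0 /= !hs !inordK //= /bump /=; lia.

Lemma rec12 x A B C D E F : shape x (A,B,C,D,E,F) ->
  reconnected 1 2 x = zip (nseq (B+F) 1 ++ nseq (A+E) 2) (nseq (A+B) 0 ++ nseq (E+F) 3).
Proof.
move=> hs; rewrite /reconnected /new_inside_seq /outside_seq /= !cats0.
have -> : cin 1 2 x (1+2-1) = B+F by csum hs.
have -> : cin 1 2 x (1+2-2) = A+E by csum hs.
have -> : cout 1 2 x 0 = A+B by csum hs.
have -> : cout 1 2 x 3 = E+F by csum hs.
by [].
Qed.

Lemma rec23 x A B C D E F : shape x (A,B,C,D,E,F) ->
  reconnected 2 3 x = zip (nseq (C+E) 2 ++ nseq (B+D) 3) (nseq (D+E) 1 ++ nseq (B+C) 0).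
Proof.
move=> hs; rewrite /reconnected /new_inside_seq /outside_seq /= !cats0.
have -> : cin 2 3 x (2+3-2) = C+E by csum hs.
have -> : cin 2 3 x (2+3-3) = B+D by csum hs.
have -> : cout 2 3 x 1 = D+E by csum hs.
have -> : cout 2 3 x 0 = B+C by csum hs.
by [].
Qed.

Lemma rec13 x A B C D E F : shape x (A,B,C,D,E,F) ->
  reconnected 1 3 x = nseq C (1,0) ++ nseq B (2,0) ++ nseq A (3,0).
Proof.
move=> hs; rewrite /reconnected /new_inside_seq /outside_seq /= !cats0.
have -> : cin 1 3 x (1+3-1) = C by csum hs.
have -> : cin 1 3 x (1+3-2) = B by csum hs.
have -> : cin 1 3 x (1+3-3) = A by csum hs.
have -> : cout 1 3 x 0 = C+B+A by csum hs.
exact: zcount3.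
Qed.

Ltac ord4 i := let H := fresh "H" in case: i => [[|[|[|[|i]]]] H] //.

Lemma act12 x A B C D E F : shape x (A,B,C,D,E,F) -> shape (act 1 2 x) (f12 (A,B,C,D,E,F)).
Proof.
move=> hs i j; rewrite /act ffunE /= (rec12 hs).
have [h1 h2 h3 h4] := @zcount _ _ 1 2 0 3 (B+F) (A+E) (A+B) (E+F) isT isT ltac:(lia).
ord4 i; ord4 j; rewrite /act_arcs /inside /refl /= ?hs ?inordK //= ?h1 ?h2 ?h3 ?h4 //.
Qed.

Lemma act23 x A B C D E F : shape x (A,B,C,D,E,F) -> shape (act 2 3 x) (f23 (A,B,C,D,E,F)).
Proof.
move=> hs i j; rewrite /act ffunE /= (rec23 hs).
have [h1 h2 h3 h4] := @zcount _ _ 2 3 1 0 (C+E) (B+D) (D+E) (B+C) isT isT ltac:(lia).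
ord4 i; ord4 j; rewrite /act_arcs /inside /refl /= ?hs ?inordK //= ?h1 ?h2 ?h3 ?h4 //.
Qed.

Lemma act13 x A B C D E F : shape x (A,B,C,D,E,F) -> shape (act 1 3 x) (f13 (A,B,C,D,E,F)).
Proof.
move=> hs i j; rewrite /act ffunE /= (rec13 hs).
ord4 i; ord4 j; rewrite /act_arcs /inside /refl /= ?hs ?inordK //= !count_cat !count_nseq //= ?addn0 ?muln0 ?mul1n ?addn0.
all: by rewrite ?mul0n.
Qed.

Definition rowv (s : st) (k : nat) := mkA s k 0 + mkA s k 1 + mkA s k 2 + mkA s k 3.

Lemma ordI k (H : k < 4) : Ordinal H = inord k.
Proof. by apply/val_inj; rewrite /= inordK. Qed.

Definition nums (x : diagram 3) : st :=
  (arcs x (inord 0, inord 1), arcs x (inord 0, inord 2), arcs x (inord 0, inord 3),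
   arcs x (inord 1, inord 2), arcs x (inord 1, inord 3), arcs x (inord 2, inord 3)).

Lemma shape_of x : (forall i, arcs x (i,i) = 0) -> (forall i j, arcs x (i,j) = arcs x (j,i)) ->
  shape x (nums x).
Proof.
move=> hd hsym i j; ord4 i; ord4 j; rewrite /nums /= !ordI;
  try first [by [] | by rewrite hd | by rewrite hsym].
Qed.

Lemma rowsum x s (hs : shape x s) (i : 'I_4) : \sum_j arcs x (i,j) = rowv s i.
Proof.
by rewrite !big_ord_recl big_ord0 /= !hs /rowv /bump /= addn0 !addnA.
Qed.

Lemma border_shape x A B C D E F : shape x (A,B,C,D,E,F) ->
  border x = minn A (minn D (minn F C)).
Proof.
move=> hs; rewrite /border !big_ord_recl big_ord0 /= !hs /=.
lia.
Qed.

Section WF.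
Variable v : 'I_4 -> nat.

Lemma wf_shape x : wf v x -> shape x (nums x).
Proof. by case=> _ hd hsym _ _; apply: shape_of. Qed.

Lemma wf_nc x A B C D E F : wf v x -> shape x (A,B,C,D,E,F) -> B = 0 \/ E = 0.
Proof.
case=> _ _ _ hnc _ hs.
have := hnc (inord 0) (inord 1) (inord 2) (inord 3).
by rewrite !inordK // !hs !inordK //=; apply.
Qed.

Lemma wf_rows x s : wf v x -> shape x s -> forall k, k < 4 -> rowv s k = v (lab x (inord k)).
Proof.
case=> _ _ _ _ hv hs k hk; rewrite -hv (rowsum hs) inordK //.
Qed.

Lemma wf_of x A B C D E F : shape x (A,B,C,D,E,F) -> (B = 0 \/ E = 0) ->
  injective (lab x) -> lab x ord0 = ord0 ->
  (forall k, k < 4 -> rowv (A,B,C,D,E,F) k = v (lab x (inord k))) -> wf v x.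
Proof.
move=> hs hnc hinj h0 hr; split => //.
- by move=> i; rewrite hs; ord4 i.
- by move=> i j; rewrite !hs; ord4 i; ord4 j.
- move=> a b c d; rewrite !hs; ord4 a; ord4 b; ord4 c; ord4 d => //=.
- move=> i; have ei : i = inord i by apply/val_inj; rewrite /= inordK.
  by rewrite (rowsum hs) {2}ei hr.
Qed.
End WF.

Lemma lab_act p q (x : diagram 3) i : lab (act p q x) i = act_lab p q x i.
Proof. by rewrite /act ffunE. Qed.

Ltac inj_tac hinj :=
  let i := fresh "i" in let j := fresh "j" in
  move=> i j; rewrite !lab_act /act_lab /inside /refl;
  ord4 i; ord4 j; rewrite /= !ordI;
  move=> /hinj /(congr1 (@nat_of_ord 4)); rewrite !inordK // => e; apply/val_inj; rewrite /= ?inordK //; lia.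

Ltac wf_act_tac actl :=
  let A := fresh "A" in let B := fresh "B" in let C := fresh "C" in
  let D := fresh "D" in let E := fresh "E" in let F := fresh "F" in
  let w := fresh "w" in let hs := fresh "hs" in let hinj := fresh "hinj" in
  let h0 := fresh "h0" in let k := fresh "k" in let hr := fresh "hr" in let hnc := fresh "hnc" in
  move=> w; have [[hinj h0] _ _ _ _] := w; move: (wf_shape w);
  case: (nums _) => [[[[[A B] C] D] E] F] hs;
  have hnc := wf_nc w hs; have hr := wf_rows w hs;
  apply: (wf_of (actl _ _ _ _ _ _ _ hs));
  [ rewrite /f12 /f23 /f13; lia
  | inj_tac hinj
  | by rewrite lab_act /act_lab /=
  | move=> k; case: k => [|[|[|[|k]]]] // _; rewrite lab_act /act_lab /inside /refl; rewrite !inordK //= ?ordI -hr //;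
    rewrite /rowv /=; lia ].

Lemma wf_act12 v (x : diagram 3) : wf v x -> wf v (act 1 2 x).
Proof. wf_act_tac act12. Qed.
Lemma wf_act23 v (x : diagram 3) : wf v x -> wf v (act 2 3 x).
Proof. wf_act_tac act23. Qed.
Lemma wf_act13 v (x : diagram 3) : wf v x -> wf v (act 1 3 x).
Proof. wf_act_tac act13. Qed.

Definition gsh (s : st) : st :=
  let: (A,B,C,D,E,F) := s in
  if minn A F <= minn C D then let k := minn C D - minn A F in (A+k,B,C-k,D-k,E,F+k)
  else let k := minn A F - minn C D in (A-k,B,C+k,D+k,E,F-k).

Ltac splitif := repeat match goal with
 | |- context [if ?a < ?b then _ else _] => case: (ltnP a b) => ?
 | |- context [if ?a <= ?b then _ else _] => case: (leqP a b) => ?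
 end.

Lemma G A B C D E F : (B = 0 \/ E = 0) ->
  f13 (f12 (f23 (f12 (A,B,C,D,E,F)))) = gsh (A,B,C,D,E,F).
Proof.
case=> ->.
- rewrite /f12 /= /minn; splitif; rewrite /f23 /= /minn; splitif; rewrite /f12 /= /minn; splitif;
  rewrite /f13 /gsh /minn; splitif; congr (_,_,_,_,_,_); lia.
- rewrite /f12 /= /minn; splitif; rewrite /f23 /= /minn; splitif; rewrite /f12 /= /minn; splitif;
  rewrite /f13 /gsh /minn; splitif; congr (_,_,_,_,_,_); lia.
Qed.

Lemma minn4 a b c d : minn a (minn b (minn c d)) = minn (minn a c) (minn d b).
Proof. lia. Qed.

Lemma key A B C D E F A' B' C' D' E' F' :
  (B = 0 \/ E = 0) -> (B' = 0 \/ E' = 0) ->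
  (forall k, rowv (A,B,C,D,E,F) k = rowv (A',B',C',D',E',F') k) ->
  minn A (minn D (minn F C)) = minn A' (minn D' (minn F' C')) ->
  (A',B',C',D',E',F') = (A,B,C,D,E,F) \/
  (A',B',C',D',E',F') = f13 (f12 (f23 (f12 (A,B,C,D,E,F)))).
Proof.
move=> h1 h2 hr hb; rewrite G //.
move: (hr 0) (hr 1) (hr 2) (hr 3); rewrite /rowv /= => e1 e2 e3 e4.
have [eB eE] : B' = B /\ E' = E by clear hb; lia.
subst B' E'; rewrite !minn4 in hb; rewrite /gsh.
have [eA|nA] := eqVneq A' A.
  by left; clear hb; congr (_,_,_,_,_,_); lia.
right; case: (leqP A A') => hAA.
- have [k ek] : exists k, A' = A + k by exists (A' - A); lia.
  have eC : C = C' + k by clear hb; lia.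
  have eD : D = D' + k by clear hb; lia.
  have eF : F' = F + k by clear hb; lia.
  have m1 : minn A' F' = minn A F + k by rewrite ek eF addn_minl.
  have m2 : minn C D = minn C' D' + k by rewrite eC eD addn_minl.
  rewrite m1 m2 in hb *.
  move: hb; generalize (minn A F) (minn C' D') => a b hb.
  rewrite ek eF eC eD; clear -hb nA ek.
  case: leqP => h; congr (_,_,_,_,_,_); lia.
- have [k ek] : exists k, A = A' + k by exists (A - A'); lia.
  have eC : C' = C + k by clear hb; lia.
  have eD : D' = D + k by clear hb; lia.
  have eF : F = F' + k by clear hb; lia.
  have m1 : minn A F = minn A' F' + k by rewrite ek eF addn_minl.
  have m2 : minn C' D' = minn C D + k by rewrite eC eD addn_minl.
  rewrite m1 m2 in hb *.
  move: hb; generalize (minn A' F') (minn C D) => a b hb.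
  rewrite ek eF eC eD; clear -hb nA ek.
  case: leqP => h; congr (_,_,_,_,_,_); lia.
Qed.

Lemma labact p q (x : diagram 3) k : k < 4 ->
  lab (act p q x) (inord k) = lab x (inord (if (p <= k) && (k <= q) then p + q - k else k)).
Proof. by move=> hk; rewrite lab_act /act_lab /inside /refl inordK //; case: ifP. Qed.

Section Orbit.
Variable v : 'I_4 -> nat.

Lemma orb_act p q x : 1 <= p -> p < q -> q <= 3 -> wf v x -> wf v (act p q x) ->
  same_orbit v x (act p q x).
Proof.
move=> h1 h2 h3 w w'; apply: rst_step; split => //; split => //.
by exists p, q.
Qed.

Lemma border_act p q x : wf v x -> 1 <= p -> p < q -> q <= 3 -> border (act p q x) = border x.
Proof.
move=> w; move: (wf_shape w); case: (nums x) => [[[[[A B] C] D] E] F] hs.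
have hnc := wf_nc w hs.
case: p => [|[|[|p]]] //; case: q => [|[|[|[|q]]]] // _ _ _.
- rewrite (border_shape (act12 hs)) (border_shape hs) /f12 /=; lia.
- rewrite (border_shape (act13 hs)) (border_shape hs) /f13 /=; lia.
- rewrite (border_shape (act23 hs)) (border_shape hs) /f23 /=; lia.
Qed.

Lemma orbit_border x y : same_orbit v x y -> border x = border y.
Proof.
elim=> [a b [w [_ [p [q [h1 h2 h3 ->]]]]]|a|a b _ IH|a b c _ IH1 _ IH2].
- by rewrite border_act.
- by [].
- by [].
- by rewrite IH1 IH2.
Qed.

Definition labid (x : diagram 3) := forall k, k < 4 -> nat_of_ord (lab x (inord k)) = k.

Lemma sort_lab x : wf v x -> exists y, [/\ same_orbit v x y, wf v y & labid y].
Proof.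
move=> w; have [[hinj h0] _ _ _ _] := w.
have w12 := wf_act12 w; have w23 := wf_act23 w; have w13 := wf_act13 w.
have lv : forall k, k < 4 -> nat_of_ord (lab x (inord k)) < 4 by move=> k _; exact: ltn_ord.
have l0 : nat_of_ord (lab x (inord 0)) = 0.
  by rewrite (_ : inord 0 = ord0) ?h0 //; apply/val_inj; rewrite /= inordK.
have dist : forall a b, a < 4 -> b < 4 -> a != b ->
    nat_of_ord (lab x (inord a)) != nat_of_ord (lab x (inord b)).
  move=> a b ha hb hab; apply/negP => /eqP /val_inj /hinj /(congr1 (@nat_of_ord 4)).
  by rewrite !inordK //; apply/eqP.
have d01 := dist 0 1 isT isT isT; have d02 := dist 0 2 isT isT isT.
have d03 := dist 0 3 isT isT isT; have d12 := dist 1 2 isT isT isT.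
have d13 := dist 1 3 isT isT isT; have d23 := dist 2 3 isT isT isT.
have b1 := lv 1 isT; have b2 := lv 2 isT; have b3 := lv 3 isT.
rewrite l0 in d01 d02 d03.
move: b1 b2 b3 d01 d02 d03 d12 d13 d23.
set l1 := nat_of_ord (lab x (inord 1)); set l2 := nat_of_ord (lab x (inord 2)).
set l3 := nat_of_ord (lab x (inord 3)) => b1 b2 b3 d01 d02 d03 d12 d13 d23.
have : [|| [&& l1 == 1, l2 == 2 & l3 == 3], [&& l1 == 2, l2 == 1 & l3 == 3],
         [&& l1 == 1, l2 == 3 & l3 == 2], [&& l1 == 3, l2 == 2 & l3 == 1],
         [&& l1 == 2, l2 == 3 & l3 == 1] | [&& l1 == 3, l2 == 1 & l3 == 2]].
  clearbody l1 l2 l3; move: b1 b2 b3 d01 d02 d03 d12 d13 d23.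
  by case: l1 => [|[|[|[|?]]]] //; case: l2 => [|[|[|[|?]]]] //; case: l3 => [|[|[|[|?]]]].
case/orP=> [H|/orP[H|/orP[H|/orP[H|/orP[H|H]]]]]; move/and3P: H => [/eqP e1 /eqP e2 /eqP e3].
- exists x; split => //; first exact: rst_refl.
  by case=> [|[|[|[|k]]]] // _.
- exists (act 1 2 x); split => //; first exact: (@orb_act 1 2 x isT isT isT w w12).
  by case=> [|[|[|[|k]]]] // _; rewrite labact //=.
- exists (act 2 3 x); split => //; first exact: (@orb_act 2 3 x isT isT isT w w23).
  by case=> [|[|[|[|k]]]] // _; rewrite labact //=.
- exists (act 1 3 x); split => //; first exact: (@orb_act 1 3 x isT isT isT w w13).
  by case=> [|[|[|[|k]]]] // _; rewrite labact //=.
- have w' := wf_act13 w12.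
  exists (act 1 3 (act 1 2 x)); split => //.
    exact: rst_trans (@orb_act 1 2 x isT isT isT w w12) (@orb_act 1 3 _ isT isT isT w12 w').
  by case=> [|[|[|[|k]]]] // _; rewrite !labact //=.
- have w' := wf_act13 w23.
  exists (act 1 3 (act 2 3 x)); split => //.
    exact: rst_trans (@orb_act 2 3 x isT isT isT w w23) (@orb_act 1 3 _ isT isT isT w23 w').
  by case=> [|[|[|[|k]]]] // _; rewrite !labact //=.
Qed.
End Orbit.

Lemma diag_eq x y s : shape x s -> shape y s -> lab x = lab y -> x = y.
Proof.
case: x => lx ax; case: y => ly ay /= hx hy hl; subst.
by congr Diagram; apply/ffunP => -[i j]; rewrite hx hy.
Qed.

Lemma labid_eq x y : labid x -> labid y -> lab x = lab y.
Proof.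
move=> hx hy; apply/ffunP => i; apply/val_inj.
by rewrite /= -(inord_val i) hx ?hy.
Qed.

Unset Implicit Arguments.
Theorem mainTheorem8 (l1 l2 l3 linf : nat) (x y : diagram 3) :
  wf (valence3 l1 l2 l3 linf) x -> wf (valence3 l1 l2 l3 linf) y ->
  (same_orbit (valence3 l1 l2 l3 linf) x y <-> border x = border y).
Proof.
set v := valence3 l1 l2 l3 linf.
move=> wx wy; split; first exact: orbit_border.
move=> hb.
have [x1 [ox1 wx1 lx1]] := sort_lab wx; have [y1 [oy1 wy1 ly1]] := sort_lab wy.
have hb1 : border x1 = border y1 by rewrite -(orbit_border ox1) -(orbit_border oy1).
suff h : same_orbit v x1 y1 by apply: rst_trans ox1 (rst_trans _ _ _ _ _ h (rst_sym _ _ _ _ oy1)).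
move: (wf_shape wx1) (wf_shape wy1).
case: (nums x1) => [[[[[A B] C] D] E] F] hx; case: (nums y1) => [[[[[A' B'] C'] D'] E'] F'] hy.
have rows : forall k, rowv (A,B,C,D,E,F) k = rowv (A',B',C',D',E',F') k.
  move=> k; case: (ltnP k 4) => hk.
    by rewrite (wf_rows wx1 hx) // (wf_rows wy1 hy) // (labid_eq lx1 ly1).
  by case: k hk => [|[|[|[|k]]]].
rewrite (border_shape hx) (border_shape hy) in hb1.
case: (key (wf_nc wx1 hx) (wf_nc wy1 hy) rows hb1) => e.
- rewrite e in hy; rewrite (diag_eq hx hy (labid_eq lx1 ly1)); exact: rst_refl.
- have hz := act13 (act12 (act23 (act12 hx))).
  rewrite -e in hz.
  have w1 := wf_act12 wx1; have w2 := wf_act23 w1; have w3 := wf_act12 w2; have w4 := wf_act13 w3.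
  have lz : labid (act 1 3 (act 1 2 (act 2 3 (act 1 2 x1)))).
    by case=> [|[|[|[|k]]]] // _; rewrite !labact //= lx1.
  rewrite (diag_eq hy hz (labid_eq ly1 lz)).
  apply: rst_trans (@orb_act v 1 2 _ isT isT isT wx1 w1) _.
  apply: rst_trans (@orb_act v 2 3 _ isT isT isT w1 w2) _.
  apply: rst_trans (@orb_act v 1 2 _ isT isT isT w2 w3) _.
  exact: (@orb_act v 1 3 _ isT isT isT w3 w4).
Qed.
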